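(* Let $p$ be an odd prime, $q=p^m$, and let $D$ be the set of all nonzero squares in $\mathrm{GF}(q)$. If $m$ is odd, then $\mathcal{C}_D$ is a one-weight code over $\mathrm{GF}(p)$ with parameters $[(q-1)/2,\ m,\ (p-1)q/(2p)]$. If $m$ is even, then $\mathcal{C}_D$ is a two-weight code over $\mathrm{GF}(p)$ with parameters $[(q-1)/2,\ m,\ (p-1)(q-\sqrt q)/(2p)]$ and weight enumerator $1+\frac{q-1}{2}z^{(p-1)(q-\sqrt q)/(2p)}+\frac{q-1}{2}z^{(p-1)(q+\sqrt q)/(2p)}$.
   Context: $\mathrm{Tr}$ denotes the absolute trace from $\mathrm{GF}(q)$ onto $\mathrm{GF}(p)$. For a subset $D=\{d_1,\dots,d_n\}\subseteq\mathrm{GF}(q)$ (listed in a fixed order), $\mathcal{C}_D=\{(\mathrm{Tr}(xd_1),\dots,\mathrm{Tr}(xd_n)) : x\in\mathrm{GF}(q)\}$, a linear code of length $n$ over $\mathrm{GF}(p)$. The weight enumerator of a code of length $n$ is $\sum_{i=0}^n A_iz^i$ where $A_i$ is the number of codewords of Hamming weight $i$; a $t$-weight code is one with exactly $t$ distinct nonzero weights. *)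

(* Defs.v *)
From HB Require Import structures.
From mathcomp Require Import all_boot all_order all_algebra all_field.
Set Implicit Arguments. Unset Strict Implicit. Unset Printing Implicit Defensive.
Import GRing.Theory.
Local Open Scope ring_scope.

Definition abs_trace (F : finFieldType) (p m : nat) (x : F) : F :=
  \sum_(i < m) x ^+ (p ^ i).

Definition nzsquares (F : finFieldType) : {set F} :=
  [set x : F | (x != 0) && [exists y : F, y ^+ 2 == x]].

(* The codeword (Tr(x d))_{d in D}, encoded as a function F -> F that is
   zero outside D (coordinates indexed by the elements of D). *)
Definition codeword (F : finFieldType) (p m : nat) (D : {set F}) (x : F)
  : {ffun F -> F} :=
  [ffun d => if d \in D then abs_trace p m (x * d) else 0].

Definition code_D (F : finFieldType) (p m : nat) (D : {set F})
  : {set {ffun F -> F}} :=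
  [set codeword p m D x | x : F].

Definition hweight (F : finFieldType) (D : {set F}) (c : {ffun F -> F}) : nat :=
  #|[set d in D | c d != 0]|.

Definition wcount (F : finFieldType) (D : {set F}) (C : {set {ffun F -> F}})
  (i : nat) : nat :=
  #|[set c in C | hweight D c == i]|.

Definition nz_weights (F : finFieldType) (D : {set F}) (C : {set {ffun F -> F}})
  : pred nat := fun w => [exists c in C, (c != 0) && (hweight D c == w)].

(* Main.v *)
Require Import Defs.
From HB Require Import structures.
From mathcomp Require Import all_boot all_order all_algebra all_field.
From mathcomp Require Import ring zify.
Set Implicit Arguments. Unset Strict Implicit. Unset Printing Implicit Defensive.
Import GRing.Theory.
Local Open Scope ring_scope.

Lemma card_set_sum (T : finType) (P : pred T) :
  #|[set y | P y]| = (\sum_(y : T) (P y : nat))%N.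
Proof.
rewrite -sum1_card big_mkcond /=; apply: eq_bigr => y _; rewrite in_set.
by case: (P y).
Qed.

Lemma count_swap (T U : finType) (R : T -> U -> bool) :
  (\sum_(x : T) #|[set y | R x y]| = \sum_(y : U) #|[set x | R x y]|)%N.
Proof.
under eq_bigr do rewrite card_set_sum.
rewrite exchange_big /=; apply: eq_bigr => y _.
by rewrite card_set_sum.
Qed.

Lemma card_pairs (T U : finType) (R : T -> U -> bool) :
  #|[set u : T * U | R u.1 u.2]| = (\sum_(x : T) #|[set y | R x y]|)%N.
Proof.
rewrite card_set_sum -(pair_big xpredT xpredT (fun x y => (R x y : nat))) /=.
by apply: eq_bigr => x _; rewrite card_set_sum.
Qed.

Lemma cert (pm1 qm1 s a A K : int) :
  a + pm1 * A = qm1 + 1 ->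
  a * a + pm1 * (A * A) = qm1 + 1 + qm1 * K ->
  (pm1 + 1) * K = qm1 + 1 ->
  s * s = qm1 + 1 ->
  ((pm1 + 1) * a - (qm1 + 1)) ^+ 2 = (pm1 * s) ^+ 2.
Proof.
move=> e1 e2 e3 e4; apply/eqP; rewrite -subr_eq0; apply/eqP.
transitivity ((pm1 + 1) * pm1 * ((a * a + pm1 * (A * A)) - (qm1 + 1 + qm1 * K))
  - (pm1 + 1) * ((a + pm1 * A) - (qm1 + 1)) * (2 * ((qm1 + 1) - a) + ((a + pm1 * A) - (qm1 + 1)))
  + pm1 * qm1 * ((pm1 + 1) * K - (qm1 + 1)) + pm1 ^+ 2 * ((qm1 + 1) - s * s)).
  by ring.
by rewrite e1 e2 e3 e4 !subrr; ring.
Qed.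

Section Main.
Variables (F : finFieldType) (p m : nat).
Hypotheses (pr_p : prime p) (odd_p : odd p) (pF : p \in [pchar F]%R)
  (m_gt0 : (0 < m)%N) (cardF : #|F| = (p ^ m)%N).

Local Notation q := (p ^ m)%N.
Local Notation Tr := (@abs_trace F p m).

Lemma p_gt1 : (1 < p)%N. Proof. exact: prime_gt1. Qed.
Lemma p_gt2 : (2 < p)%N.
Proof. have := p_gt1; case: p odd_p => [|[|[|]]] //. Qed.

Lemma pnat_pi i : [pchar F].-nat (p ^ i)%N.
Proof.
rewrite pnatX; apply/orP; left.
by rewrite (eq_pnat _ (pcharf_eq pF)) pnat_id.
Qed.

Lemma frobD i (x y : F) : (x + y) ^+ (p ^ i) = x ^+ (p ^ i) + y ^+ (p ^ i).
Proof. exact: exprDn_pchar (pnat_pi i). Qed.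

Lemma frob0 i : (0 : F) ^+ (p ^ i) = 0.
Proof. by rewrite expr0n expn_eq0; case: p pr_p. Qed.

Lemma TrD x y : Tr (x + y) = Tr x + Tr y.
Proof. by rewrite /abs_trace -big_split; apply: eq_bigr => i _; rewrite frobD. Qed.

Lemma Tr0 : Tr 0 = 0.
Proof. by rewrite /abs_trace big1 // => i _; rewrite frob0. Qed.

Lemma TrN x : Tr (- x) = - Tr x.
Proof. by apply/eqP; rewrite -subr_eq0 opprK -TrD addNr Tr0. Qed.

Lemma TrB x y : Tr (x - y) = Tr x - Tr y.
Proof. by rewrite TrD TrN. Qed.

Lemma fixP_pow (c : F) i : c ^+ p = c -> c ^+ (p ^ i) = c.
Proof. move=> hc; elim: i => [|i IH]; first by rewrite expn0 expr1.
by rewrite expnSr exprM IH. Qed.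

Lemma TrZ (c x : F) : c ^+ p = c -> Tr (c * x) = c * Tr x.
Proof.
move=> hc; rewrite /abs_trace mulr_sumr; apply: eq_bigr => i _.
by rewrite exprMn (fixP_pow i hc).
Qed.

Lemma qpow (x : F) : x ^+ q = x.
Proof. by rewrite -cardF expf_card. Qed.

Lemma frob_sum n (f : 'I_n -> F) : (\sum_(i < n) f i) ^+ p = \sum_(i < n) f i ^+ p.
Proof.
elim: n f => [|n IH] f; first by rewrite !big_ord0 expr0n; case: p pr_p.
by rewrite !big_ord_recr /= -(expn1 p) frobD IH.
Qed.

Lemma Tr_fix x : Tr x ^+ p = Tr x.
Proof.
rewrite /abs_trace frob_sum.
under eq_bigr do rewrite -exprM -expnSr.
case: m m_gt0 cardF => // n _ cF.
rewrite big_ord_recr big_ord_recl /= expn0 expr1.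
rewrite -{1}cF expf_card addrC; congr (_ + _).
Qed.

Lemma roots_card (P : {poly F}) (A : {set F}) :
  P != 0 -> (forall x, x \in A -> P.[x] = 0) -> (#|A| < size P)%N.
Proof.
move=> P0 hA; rewrite cardE; apply: max_poly_roots => //; last exact: enum_uniq.
by apply/allP => x; rewrite mem_enum => /hA hx; rewrite /root hx.
Qed.

Definition TP n : {poly F} := \sum_(i < n) 'X^(p ^ i).

Lemma size_TP n : size (TP n.+1) = (p ^ n).+1.
Proof.
elim: n => [|n IH]; first by rewrite /TP big_ord1 expn0 size_polyXn.
rewrite /TP big_ord_recr /= addrC size_polyDl size_polyXn //.
by rewrite -/(TP n.+1) IH ltnS ltn_exp2l // p_gt1.
Qed.

Lemma TP_eval n x : (TP n).[x] = \sum_(i < n) x ^+ (p ^ i).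
Proof. by rewrite /TP horner_sum; apply: eq_bigr => i _; rewrite hornerXn. Qed.

Lemma Tr_nz : exists z, Tr z != 0.
Proof.
case: (boolP [exists z, Tr z != 0]) => [/existsP //|/existsPn h].
have h0 : forall z, z \in [set: F] -> (TP m).[z] = 0.
  by move=> z _; rewrite TP_eval; apply/eqP; move: (h z); rewrite negbK.
case: m m_gt0 cardF h0 => // n _ cF h0.
have := roots_card _ h0; rewrite size_TP cardsT cF.
have -> : (TP n.+1 != 0) = true.
  by rewrite -size_poly_eq0 size_TP.
move=> /(_ isT); rewrite ltnS leqNgt ltn_exp2l ?ltnSn //; exact: p_gt1.
Qed.

Definition Pset : {set F} := [set c : F | c ^+ p == c].

Lemma card_Pset_le : (#|Pset| <= p)%N.
Proof.
have hs : size ('X^p - 'X : {poly F}) = p.+1.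
  by rewrite size_polyDl size_polyXn // size_polyN size_polyX ltnS p_gt1.
rewrite -ltnS -hs; apply: roots_card; first by rewrite -size_poly_eq0 hs.
by move=> x; rewrite in_set => /eqP hx; rewrite hornerD hornerN hornerXn hornerX hx subrr.
Qed.

Lemma natP k : (k%:R : F) ^+ p = k%:R.
Proof.
elim: k => [|k IH]; first by rewrite expr0n; case: p pr_p.
by rewrite -addn1 natrD -(expn1 p) frobD expn1 IH expr1n.
Qed.

Lemma nat_inj k j : (k < p)%N -> (j < p)%N -> (k%:R : F) = j%:R -> k = j.
Proof.
wlog kj : k j / (k <= j)%N.
  move=> H hk hj e; case: (leqP k j) => [kj|/ltnW jk]; first exact: H.
  by apply/esym/H.
move=> hk hj e.
have h0 : ((j - k)%:R : F) = 0 by rewrite natrB // e subrr.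
have : (p %| j - k)%N by rewrite (dvdn_pcharf pF) h0.
move=> hd; case: (posnP (j - k)) => [h|h]; first by lia.
have := dvdn_leq h hd; lia.
Qed.

Lemma Tr_P x : Tr x \in Pset.
Proof. by rewrite in_set Tr_fix. Qed.

Lemma Pset_nat (c0 : F) : c0 \in Pset -> c0 != 0 ->
  Pset = [set k%:R * c0 | k : 'I_p] /\ #|Pset| = p.
Proof.
move=> hc0 nz.
have hI : #|[set k%:R * c0 | k : 'I_p]| = p.
  rewrite card_imset ?card_ord // => k j /(mulIf nz) /nat_inj e.
  by apply/val_inj/e.
have sub : [set k%:R * c0 | k : 'I_p] \subset Pset.
  apply/subsetP => y /imsetP [k _ ->]; rewrite in_set exprMn natP.
  by move: hc0; rewrite in_set => /eqP ->.
have E : [set k%:R * c0 | k : 'I_p] = Pset.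
  by apply/eqP; rewrite eqEcard sub hI card_Pset_le.
by rewrite -E hI.
Qed.

Lemma fiber_sum (T : finType) (f : T -> F) (A : {set T}) :
  (forall v, f v \in Pset) ->
  (\sum_(c in Pset) #|[set v in A | f v == c]| = #|A|)%N.
Proof.
move=> hf; rewrite -sum1_card (partition_big f (mem Pset)) //=.
apply: eq_bigr => c _; rewrite -sum1_card; apply: eq_bigl => v.
by rewrite !inE.
Qed.

Definition K := #|[set v : F | Tr v == 0]|.

Lemma fiber_K c : c \in Pset -> #|[set v : F | Tr v == c]| = K.
Proof.
have [z0 nz] := Tr_nz.
have [E _] := Pset_nat (Tr_P z0) nz.
rewrite E => /imsetP [k _ ->].
rewrite /K -(card_preimset _ (addIr (k%:R * z0))); apply: eq_card => v.
by rewrite !inE TrD (TrZ _ (natP k)) -subr_eq0 addrK.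
Qed.

Lemma pK : (p * K = q)%N.
Proof.
have [z0 nz] := Tr_nz; have [_ cP] := Pset_nat (Tr_P z0) nz.
rewrite -cardF -cardsT -(fiber_sum [set: F] Tr_P).
rewrite (eq_bigr (fun _ => K)); first by rewrite sum_nat_const cP.
move=> c hc.
by rewrite -(fiber_K hc); apply: eq_card => v; rewrite !inE.
Qed.


Local Notation S := (nzsquares F).
Local Notation h := ((p ^ m - 1) %/ 2)%N.

Lemma q_odd : odd q. Proof. by rewrite oddX odd_p orbT. Qed.
Lemma q_ge3 : (3 <= q)%N.
Proof. apply: leq_trans p_gt2 _; rewrite -{1}(expn1 p) leq_pexp2l //; exact: prime_gt0. Qed.
Lemma h2 : (2 * h = q - 1)%N.
Proof.
have o := q_odd; rewrite mulnC divnK //.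
by rewrite dvdn2 oddB ?o //; apply: leq_trans q_ge3.
Qed.
Lemma h_gt0 : (0 < h)%N. Proof. have := h2; have := q_ge3; lia. Qed.

Lemma two_nz : (2%:R : F) != 0.
Proof.
rewrite -(dvdn_pcharf pF); apply/negP => /(dvdn_leq (isT : (0 < 2)%N)).
by rewrite leqNgt p_gt2.
Qed.

Lemma expq1 (y : F) : y != 0 -> y ^+ (q - 1) = 1.
Proof.
move=> nz; apply: (mulfI nz); rewrite mulr1 -exprS subn1 prednK ?qpow //.
by rewrite expn_gt0 prime_gt0.
Qed.

Lemma inS x : (x \in S) = (x != 0) && [exists y, y ^+ 2 == x].
Proof. by rewrite inE. Qed.

Lemma sq_fiber d : d \in S -> #|[set y : F | y ^+ 2 == d]| = 2%N.
Proof.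
rewrite inS => /andP [nz /existsP [y0 /eqP hy]].
have -> : [set y : F | y ^+ 2 == d] = [set y0; - y0].
  by apply/setP => y; rewrite !inE -hy eqf_sqr.
rewrite cards2; suff -> : y0 != - y0 by [].
apply/negP; rewrite -subr_eq0 opprK -mulr2n -mulr_natr mulf_eq0 (negbTE two_nz) orbF.
by move=> /eqP y00; move: nz; rewrite -hy y00 expr0n eqxx.
Qed.

Lemma sq_count (Pd : pred F) :
  #|[set y : F | (y != 0) && Pd (y ^+ 2)]| = (2 * #|[set d in S | Pd d]|)%N.
Proof.
rewrite -sum1_card (partition_big (fun y => y ^+ 2) (mem S)) /=; last first.
  move=> y; rewrite inE => /andP [nz _]; rewrite inS expf_neq0 //=; apply/existsP; by exists y.
rewrite mulnC -sum_nat_const big_mkcond [RHS]big_mkcond /=.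
apply: eq_bigr => d _.
case hd: (d \in S); last by rewrite inE hd.
rewrite inE hd /=; case hP: (Pd d).
  rewrite sum1_card; transitivity #|[set y : F | y ^+ 2 == d]|; last exact: sq_fiber.
  apply: eq_card => y; rewrite unfold_in /= !inE.
  case e: (y ^+ 2 == d); rewrite ?andbF ?andbT //; move/eqP: e => e.
  rewrite e hP andbT; apply/negP => /eqP y0; move: hd; rewrite -e y0 expr0n inS eqxx.
  by [].
rewrite big1 // => y; rewrite inE => /andP [/andP [_ hy] /eqP e]; by move: hy; rewrite e hP.
Qed.

Lemma card_nz : #|[set y : F | y != 0]| = (q - 1)%N.
Proof.
rewrite -cardF -cardsT (cardsD1 0 [set: F]) in_setT /= add1n subn1 /=.
by apply: eq_card => y; rewrite !inE andbT.
Qed.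

Lemma card_S : #|S| = h.
Proof.
have e1 : #|[set y : F | (y != 0) && predT (y ^+ 2)]| = (q - 1)%N.
  by rewrite -card_nz; apply: eq_card => y; rewrite !inE andbT.
have e2 : #|[set d in S | predT d]| = #|S| by apply: eq_card => d; rewrite !inE andbT.
have := sq_count predT; rewrite e1 e2 -h2 => /eqP; rewrite eqn_pmul2l // => /eqP ->. by rewrite mulKn.
Qed.

Lemma euler x : x != 0 -> (x \in S) = (x ^+ h == 1).
Proof.
move=> nz; apply/idP/idP.
  rewrite inS nz /= => /existsP [y /eqP hy].
  have ynz : y != 0 by apply: contra_neq nz => y0; rewrite -hy y0 expr0n.
  by rewrite -hy -exprM h2 expq1.
move=> hx; apply/negPn/negP => nS.
have hs := size_Xn_sub_1 F h_gt0.
have H := @roots_card ('X^h - 1) (x |: S).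
rewrite -size_poly_eq0 hs cardsU1 nS card_S ltnn in H.
suff E : forall y, y \in x |: S -> ('X^h - 1).[y] = 0 by move: (H isT E).
move=> y; rewrite !inE => /orP [/eqP ->|hy].
  by rewrite hornerD hornerN hornerXn hornerC (eqP hx) subrr.
rewrite hornerD hornerN hornerXn hornerC.
move: hy => /andP [nz2 /existsP [z /eqP hz]].
have znz : z != 0 by apply: contra_neq nz2 => z0; rewrite -hz z0 expr0n.
by rewrite -hz -exprM h2 expq1 // subrr.
Qed.

Lemma odd_geom n : odd (\sum_(i < n) p ^ i)%N = odd n.
Proof.
elim: n => [|n IH]; first by rewrite big_ord0.
by rewrite big_ord_recr /= oddD IH oddX odd_p orbT /=; case: (odd n).
Qed.

Local Notation G := (\sum_(i < m) p ^ i)%N.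

Lemma qG : (q - 1 = (p - 1) * G)%N.
Proof. by rewrite !subn1 predn_exp. Qed.

Lemma hG : (2 * h = (p - 1) * G)%N.
Proof. by rewrite h2 qG. Qed.

Lemma zero_P : (0 : F) \in Pset.
Proof. by rewrite inE expr0n; case: p pr_p. Qed.

Lemma card_Pset : #|Pset| = p.
Proof. by have [z0 nz] := Tr_nz; have [_ ->] := Pset_nat (Tr_P z0) nz. Qed.

Lemma card_Pset0 : #|Pset :\ 0| = (p - 1)%N.
Proof. by rewrite -card_Pset (cardsD1 0 Pset) zero_P add1n subn1. Qed.

Lemma Pset_pow1 c : c \in Pset -> c != 0 -> c ^+ (p - 1) = 1.
Proof.
rewrite inE => /eqP hc nz; apply: (mulfI nz); rewrite mulr1 -exprS subn1 prednK //.
exact: prime_gt0.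
Qed.

Lemma Pset_sq c : ~~ odd m -> c \in Pset -> c != 0 -> c \in S.
Proof.
move=> em hc nz; rewrite euler //.
have eG : (~~ odd G) by rewrite odd_geom.
have hh : (h = (p - 1) * G./2)%N.
  apply/eqP; rewrite -(eqn_pmul2l (isT : (0 < 2)%N)) hG; apply/eqP.
  rewrite mulnCA; congr (_ * _)%N; rewrite -{1}(odd_double_half G) (negbTE eG) add0n.
  by rewrite -muln2 mulnC.
by rewrite hh exprM Pset_pow1 // expr1n.
Qed.

Lemma m1_nz : (-1 : F) != 1.
Proof.
apply/negP => /eqP e; move: two_nz; rewrite (_ : (2%:R : F) = 1 - -1).
  by rewrite e subrr eqxx.
by rewrite opprK mulr2n.
Qed.

Lemma exists_nonsq_P : odd m -> exists2 n, n \in Pset :\ 0 & n \notin S.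
Proof.
move=> om; set k := (p - 1)./2.
have k2 : (2 * k = p - 1)%N.
  rewrite /k mul2n; have := odd_double_half (p - 1).
  by rewrite oddB ?odd_p ?prime_gt0 //= add0n.
have k_gt0 : (0 < k)%N by have := p_gt2; lia.
case: (boolP [exists n in Pset :\ 0, n ^+ k != 1]) => [/existsP [n /andP [hn nk]]|/existsPn hall].
  exists n => //; move: hn => /setD1P [nz hP].
  rewrite euler //.
  have e2 : (n ^+ k) ^+ 2 == 1 by rewrite -exprM mulnC k2 Pset_pow1.
  move: e2; rewrite sqrf_eq1 (negbTE nk) /= => /eqP nk1.
  have hh : (h = k * G)%N.
    apply/eqP; rewrite -(eqn_pmul2l (isT : (0 < 2)%N)) hG mulnA k2 //.
  rewrite hh exprM nk1 -signr_odd odd_geom om expr1.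
  exact: m1_nz.
exfalso.
have hs := size_Xn_sub_1 F k_gt0.
have H := @roots_card ('X^k - 1) (Pset :\ 0).
rewrite -size_poly_eq0 hs card_Pset0 in H.
suff E : forall y, y \in Pset :\ 0 -> ('X^k - 1).[y] = 0.
  by have := H isT E; lia.
move=> y hy; have := hall y; rewrite hy /= negbK => /eqP e.
by rewrite hornerD hornerN hornerXn hornerC e subrr.
Qed.

Definition a0 x := #|[set y : F | Tr (x * y ^+ 2) == 0]|.
Definition wt x := hweight S (codeword p m S x).

Lemma wt_eq x : wt x = #|[set d in S | Tr (x * d) != 0]|.
Proof.
rewrite /wt /hweight; apply: eq_card => d; rewrite !inE ffunE.
have -> : ((d != 0) && [exists y, y ^+ 2 == d]) = (d \in S) by rewrite inE.
by case: (d \in S).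
Qed.
Lemma Tr_x0 x : Tr (x * 0 ^+ 2) = 0.
Proof. by rewrite expr0n mulr0 Tr0. Qed.

Lemma wt_a0 x : (2 * wt x + a0 x = q)%N.
Proof.
rewrite wt_eq -(sq_count (fun d => Tr (x * d) != 0)) -cardF.
rewrite -(cardsC [set y : F | Tr (x * y ^+ 2) == 0]) addnC /a0; congr (_ + _)%N.
apply: eq_card => y; rewrite !inE.
case: (eqVneq y 0) => [->|//]; by rewrite Tr_x0 eqxx.
Qed.

Lemma a0_sq x t : t != 0 -> a0 (t ^+ 2 * x) = a0 x.
Proof.
move=> nz; rewrite /a0 -[RHS](card_preimset _ (mulfI nz)); apply: eq_card => y.
rewrite !inE; congr (Tr _ == 0); rewrite exprMn; ring.
Qed.

Lemma a0_P x c : c \in Pset -> c != 0 -> a0 (c * x) = a0 x.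
Proof.
rewrite inE => /eqP hc nz; rewrite /a0; apply: eq_card => y.
by rewrite !inE -mulrA TrZ // mulf_eq0 (negbTE nz).
Qed.

Lemma kerc c : c != 0 -> #|[set v : F | Tr (c * v) == 0]| = K.
Proof.
move=> nz; rewrite /K -[RHS](card_preimset _ (mulfI nz)); apply: eq_card => y.
by rewrite !inE.
Qed.

Lemma K_gt0 : (0 < K)%N.
Proof. have := pK; have := q_ge3; case: K => //; lia. Qed.

Lemma a0_sum : (\sum_(x : F | x != 0%R) a0 x = (q - 1) * K)%N.
Proof.
rewrite (eq_bigr (fun x => #|[set y : F | (x != 0) && (Tr (x * y ^+ 2) == 0)]|)); last first.
  by move=> x nz; apply: eq_card => y; rewrite !inE nz.
rewrite big_mkcond /=.
rewrite (eq_bigr (fun x => #|[set y : F | (x != 0) && (Tr (x * y ^+ 2) == 0)]|)); last first.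
  move=> x _; case: (eqVneq x 0) => [->|//]; rewrite /=.
  by apply/esym/eqP; rewrite cards_eq0; apply/eqP/setP => y; rewrite !inE.
rewrite count_swap (bigD1 0) //=.
rewrite (eq_bigr (fun _ => K.-1)); last first.
  move=> y nz; rewrite -(kerc (expf_neq0 2 nz)) (cardsD1 0 [set v : F | Tr (y ^+ 2 * v) == 0]).
  rewrite inE mulr0 Tr0 eqxx add1n /=; apply: eq_card => x; rewrite !inE mulrC.
  by [].
rewrite sum_nat_cond_const.
have -> : #|[set x : F | (x != 0) && (Tr (x * 0 ^+ 2) == 0)]| = (q - 1)%N.
  by rewrite -card_nz; apply: eq_card => x; rewrite !inE Tr_x0 eqxx andbT.
rewrite card_nz; have := K_gt0; case: K => // k _ /=.
by rewrite mulnS.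
Qed.

Definition ac x c := #|[set y : F | Tr (x * y ^+ 2) == c]|.

Lemma ac_sum x : (\sum_(c in Pset) ac x c = q)%N.
Proof.
rewrite -cardF -cardsT -(fiber_sum [set: F] (f := fun y => Tr (x * y ^+ 2))) //.
- by apply: eq_bigr => c _; apply: eq_card => y; rewrite !inE.
- by move=> v; apply: Tr_P.
Qed.

Lemma ac_sq_sum x :
  (\sum_(c in Pset) ac x c ^ 2 = #|[set u : F * F | (Tr (x * u.1 ^+ 2) == Tr (x * u.2 ^+ 2))%R]|)%N.
Proof.
rewrite -(fiber_sum _ (f := fun u : F * F => Tr (x * u.1 ^+ 2))); last by move=> v; apply: Tr_P.
apply: eq_bigr => c _.
rewrite -mulnn -cardsX; apply: eq_card => [[y z]]; rewrite !inE /=.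
case: (eqVneq (Tr (x * y ^+ 2)) c) => [->|] /=; first by rewrite andbT.
by move=> _; rewrite andbF.
Qed.

Lemma pairs_bij x :
  #|[set u : F * F | Tr (x * u.1 ^+ 2) == Tr (x * u.2 ^+ 2)]| =
  #|[set u : F * F | Tr (x * (u.1 * u.2)) == 0]|.
Proof.
pose f (u : F * F) := ((u.1 + u.2) / 2%:R, (u.2 - u.1) / 2%:R).
pose g (u : F * F) := (u.1 - u.2, u.1 + u.2).
have fK : cancel f g.
  move=> [a b]; rewrite /f /g /=; congr (_, _); field; exact: two_nz.
rewrite -(card_preimset _ (can_inj fK)); apply: eq_card => [[a b]].
rewrite !inE /f /= -subr_eq0 -TrB; congr (Tr _ == 0).
field; exact: two_nz.
Qed.

Lemma prod_zero x : x != 0 ->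
  (#|[set u : F * F | (Tr (x * (u.1 * u.2)) == 0)%R]| = q + (q - 1) * K)%N.
Proof.
move=> nz; rewrite (card_pairs (fun a b => Tr (x * (a * b)) == 0)) (bigD1 0) //=.
have -> : #|[set y : F | Tr (x * (0 * y)) == 0]| = q.
  by rewrite -cardF -cardsT; apply: eq_card => y; rewrite !inE mul0r mulr0 Tr0 eqxx.
congr (_ + _)%N.
rewrite (eq_bigr (fun _ => K)); last first.
  move=> u unz; rewrite -(kerc (mulf_neq0 nz unz)); apply: eq_card => y.
  by rewrite !inE mulrA.
by rewrite sum_nat_cond_const card_nz.
Qed.

Lemma second_moment x : x != 0 ->
  (\sum_(c in Pset) ac x c ^ 2 = q + (q - 1) * K)%N.
Proof. by move=> nz; rewrite ac_sq_sum pairs_bij prod_zero. Qed.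

Lemma nonsq_pow x : x != 0 -> x \notin S -> x ^+ h = -1.
Proof.
move=> nz nS; have e : (x ^+ h) ^+ 2 == 1 by rewrite -exprM mulnC h2 expq1.
move: e; rewrite sqrf_eq1 -euler // (negbTE nS) /=; by move/eqP.
Qed.

Lemma S_nz x : x \in S -> x != 0.
Proof. by rewrite inS => /andP []. Qed.

Lemma S_ex x : x \in S -> exists2 t, t != 0 & x = t ^+ 2.
Proof.
move=> hx; have nz := S_nz hx; move: hx; rewrite inS => /andP [_ /existsP [t /eqP ht]].
exists t => //; apply: contra_neq nz => t0; by rewrite -ht t0 expr0n.
Qed.

Lemma a0_sqclass x : x \in S -> a0 x = a0 1.
Proof. by move=> /S_ex [t tnz ->]; rewrite -(a0_sq 1 tnz) mulr1. Qed.

Lemma a0_class x g : x != 0 -> g != 0 -> x \notin S -> g \notin S -> a0 x = a0 g.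
Proof.
move=> xnz gnz xS gS.
have hxg : x * g \in S by rewrite euler ?mulf_neq0 // exprMn !nonsq_pow // mulrNN mulr1.
have [t tnz et] := S_ex hxg.
have -> : x = t ^+ 2 * g^-1 by rewrite -et -mulrA divff ?mulr1.
rewrite a0_sq // -[in RHS](mulfK gnz g) -expr2 a0_sq //.
Qed.

Lemma ac0 x : ac x 0 = a0 x. Proof. by []. Qed.

Lemma ac_const x c : ~~ odd m -> c \in Pset -> c != 0 -> ac x c = ac x 1.
Proof.
move=> em hc cnz; have [t tnz ect] := S_ex (Pset_sq em hc cnz).
move: (hc); rewrite inE => /eqP hcp.
rewrite /ac -[LHS](card_preimset _ (mulfI tnz)); apply: eq_card => y; rewrite !inE.
have -> : x * (t * y) ^+ 2 = c * (x * y ^+ 2) by rewrite exprMn ect; ring.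
by rewrite (TrZ _ hcp) -[X in _ == X](mulr1 c) (inj_eq (mulfI cnz)).
Qed.

Lemma split_P (f : F -> nat) : (forall c, c \in Pset -> c != 0 -> f c = f 1) ->
  (\sum_(c in Pset) f c = f 0%R + (p - 1) * f 1%R)%N.
Proof.
move=> hf; rewrite (bigD1 0) ?zero_P //=; congr (_ + _)%N.
rewrite (eq_bigr (fun _ => f 1)); last by move=> c /andP [hc cnz]; apply: hf.
rewrite sum_nat_cond_const; congr (_ * _)%N.
by rewrite -card_Pset0; apply: eq_card => c; rewrite !inE andbC.
Qed.

Local Notation s := (p ^ (m %/ 2))%N.

Lemma ss : ~~ odd m -> (s * s = q)%N.
Proof.
move=> em; rewrite -expnD addnn divn2; congr (p ^ _)%N.
by rewrite -[RHS](odd_double_half m) (negbTE em) add0n.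
Qed.

Lemma key_even x : ~~ odd m -> x != 0 ->
  (p * a0 x = q + (p - 1) * s)%N \/ (p * a0 x + (p - 1) * s = q)%N.
Proof.
move=> em nz.
have E1 := ac_sum x; rewrite (split_P (fun c hc cnz => ac_const x em hc cnz)) ac0 in E1.
have E2 := second_moment nz; rewrite (split_P (f := fun c => (ac x c ^ 2)%N)) in E2; last first.
  by move=> c hc cnz; rewrite (ac_const x em hc cnz).
rewrite ac0 in E2.
have E3 := pK; have E4 := ss em.
have hp : p = (p - 1).+1 by rewrite subn1 prednK // prime_gt0.
have hq : q = (q - 1).+1 by rewrite subn1 prednK // expn_gt0 prime_gt0.
move: E1 E2 E3 E4 hp hq.
set a := a0 x; set A := ac x 1; set pm1 := (p - 1)%N; set qm1 := (q - 1)%N.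
set S0 := s.
move=> E1 E2 E3 E4 hp hq; rewrite hq in E1 E2 E3 E4 *; rewrite hp in E3 *.
clearbody a A pm1 qm1 S0.
have e1 : a%:Z + pm1%:Z * A%:Z = qm1%:Z + 1 by lia.
have e2 : a%:Z * a%:Z + pm1%:Z * (A%:Z * A%:Z) = qm1%:Z + 1 + qm1%:Z * K%:Z.
  by move: E2; rewrite !expnS !expn0 !muln1; lia.
have e3 : (pm1%:Z + 1) * K%:Z = qm1%:Z + 1 by lia.
have e4 : S0%:Z * S0%:Z = qm1%:Z + 1 by lia.
have := cert e1 e2 e3 e4; move/eqP; rewrite eqf_sqr => /orP [] /eqP e; [left|right]; lia.
Qed.


Lemma cw0 : codeword p m S 0 = 0.
Proof. by apply/ffunP => d; rewrite !ffunE mul0r Tr0; case: (d \in S). Qed.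

Lemma wt0 : wt 0 = 0%N.
Proof. rewrite wt_eq; apply/eqP; rewrite cards_eq0; apply/eqP/setP => d; rewrite !inE mul0r Tr0 eqxx andbF //. Qed.

Lemma a0_odd x : odd m -> x != 0 -> a0 x = K.
Proof.
move=> om nz.
have [n /setD1P [nnz nP] nS] := exists_nonsq_P om.
have hn : a0 n = a0 1 by rewrite -{1}(mulr1 n) a0_P.
have hall : forall y : F, y != 0 -> a0 y = a0 1.
  move=> y ynz; case: (boolP (y \in S)) => [/a0_sqclass //|yS].
  by rewrite (a0_class ynz nnz yS nS).
have := a0_sum; rewrite (eq_bigr (fun _ => a0 1)) // sum_nat_cond_const.
rewrite (_ : #|[set x : F | x != 0]| = (q - 1)%N) ?card_nz // => /eqP.
rewrite eqn_pmul2l ?subn_gt0 ?(leq_trans _ q_ge3) // => /eqP <-.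
exact: hall.
Qed.

Lemma s_lt_q : (s < q)%N.
Proof.
rewrite ltn_exp2l ?p_gt1 // divn2; case: m m_gt0 => // n _.
by rewrite ltn_half_double -addnn -addn1 leq_add2l; case: n.
Qed.

Lemma a0_lt x : x != 0 -> (a0 x < q)%N.
Proof.
move=> nz; case: (boolP (odd m)) => [om|em].
  rewrite a0_odd // -pK -{1}(mul1n K) ltn_pmul2r ?K_gt0 //; exact: p_gt1.
have hs := s_lt_q; have hp1 := p_gt1.
have Ls : ((p - 1) * s < (p - 1) * q)%N by rewrite ltn_pmul2l ?subn_gt0.
rewrite -(ltn_pmul2l (prime_gt0 pr_p)).
have Pq : (p * q = q + (p - 1) * q)%N.
  by rewrite -{2}(mul1n q) -mulnDl subnKC // ltnW.
case: (key_even em nz) => E; lia.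
Qed.

Lemma wt_pos x : x != 0 -> (0 < wt x)%N.
Proof. move=> nz; have := wt_a0 x; have := a0_lt nz; lia. Qed.

Lemma cw_nz x : (codeword p m S x != 0) = (x != 0).
Proof.
case: (eqVneq x 0) => [->|nz]; first by rewrite cw0 eqxx.
apply/negP => /eqP e; have := wt_pos nz; rewrite /wt e.
rewrite /hweight card_gt0 => /set0Pn [d]; rewrite inE => /andP [_].
by rewrite ffunE eqxx.
Qed.

Lemma cw_inj : injective (codeword p m S).
Proof.
move=> x y e; apply/eqP; rewrite -subr_eq0; apply/negPn/negP => nz.
have := wt_pos nz; rewrite wt_eq card_gt0 => /set0Pn [d]; rewrite inE => /andP [hd].
have := congr1 (fun f : {ffun F -> F} => f d) e; rewrite /= !ffunE hd => exy.
by rewrite mulrBl TrB exy subrr eqxx.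
Qed.

Lemma card_code : #|code_D p m S| = q.
Proof. by rewrite /code_D card_imset ?cardsT ?cardF //; exact: cw_inj. Qed.

Lemma wcount_eq i : wcount S (code_D p m S) i = #|[set x : F | wt x == i]|.
Proof.
rewrite /wcount /code_D -(card_imset _ cw_inj); apply: eq_card => c; rewrite inE.
apply/andP/imsetP => [[/imsetP [x _ ->] hw]|[x hx ->]].
  by exists x => //; rewrite inE.
by split; [apply: imset_f; rewrite inE | rewrite inE in hx].
Qed.

Lemma nzw_eq w : (w \in nz_weights S (code_D p m S)) = [exists x : F, (x != 0) && (wt x == w)].
Proof.
rewrite unfold_in /nz_weights; apply/existsP/existsP => [[c /andP [/imsetP [x _ ->]]]|[x hx]].
  by rewrite cw_nz => hx; exists x.
by exists (codeword p m S x); rewrite imset_f ?inE // cw_nz.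
Qed.

Lemma wt_odd x : odd m -> x != 0 -> wt x = ((p - 1) * q %/ (2 * p))%N.
Proof.
move=> om nz; have F1 := wt_a0 x; rewrite a0_odd // in F1.
have F2 := pK; have F1p := congr1 (muln p) F1; rewrite mulnDr in F1p.
have E : ((p - 1) * q = 2 * p * wt x)%N.
  rewrite mulnBl mul1n; lia.
by rewrite E mulKn // muln_gt0 (prime_gt0 pr_p).
Qed.

Lemma Pq : (p * q = q + (p - 1) * q)%N.
Proof. by rewrite -{2}(mul1n q) -mulnDl subnKC // ltnW // p_gt1. Qed.

Lemma wt_w1 x : (p * a0 x = q + (p - 1) * s)%N -> wt x = ((p - 1) * (q - s) %/ (2 * p))%N.
Proof.
move=> F2; have F1 := wt_a0 x.
have F1p := congr1 (muln p) F1; rewrite mulnDr in F1p.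
have := Pq => P1.
have E : ((p - 1) * (q - s) = 2 * p * wt x)%N.
  rewrite mulnBr; lia.
by rewrite E mulKn // muln_gt0 (prime_gt0 pr_p).
Qed.

Lemma wt_w2 x : (p * a0 x + (p - 1) * s = q)%N -> wt x = ((p - 1) * (q + s) %/ (2 * p))%N.
Proof.
move=> F2; have F1 := wt_a0 x.
have F1p := congr1 (muln p) F1; rewrite mulnDr in F1p.
have := Pq => P1.
have E : ((p - 1) * (q + s) = 2 * p * wt x)%N.
  rewrite mulnDr; lia.
by rewrite E mulKn // muln_gt0 (prime_gt0 pr_p).
Qed.

Local Notation w1 := ((p - 1) * (q - s) %/ (2 * p))%N.
Local Notation w2 := ((p - 1) * (q + s) %/ (2 * p))%N.

Lemma card_N : #|[set x : F | (x != 0) && (x \notin S)]| = h.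
Proof.
have := cardsID S [set x : F | x != 0]; rewrite card_nz.
have -> : [set x : F | x != 0] :&: S = S.
  by apply/setP => x; rewrite !inE andbA andbb.
have -> : [set x : F | x != 0] :\: S = [set x : F | (x != 0) && (x \notin S)].
  by apply/setP => x; rewrite !inE andbC.
rewrite card_S => e; have := h2; lia.
Qed.

Lemma exists_nonsqF : exists2 g : F, g != 0 & g \notin S.
Proof.
case: (boolP [exists g : F, (g != 0) && (g \notin S)]) => [/existsP [g /andP [? ?]]|/existsPn H].
  by exists g.
exfalso; have := card_N; have -> : [set x : F | (x != 0) && (x \notin S)] = set0.
  by apply/setP => x; rewrite in_set0 in_set; apply/negbTE/H.
rewrite cards0; have := h_gt0; lia.
Qed.

Lemma even_dist : ~~ odd m -> exists A1 : {set F},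
  [/\ 0 \notin A1, #|A1| = h, #|[set x : F | (x != 0) && (x \notin A1)]| = h &
      forall x, x != 0 -> wt x = if x \in A1 then w1 else w2].
Proof.
move=> em; have [g gnz gS] := exists_nonsqF.
set al := a0 1; set be := a0 g.
have hS : forall x, x \in S -> a0 x = al by move=> x /a0_sqclass.
have hN : forall x, x != 0 -> x \notin S -> a0 x = be by move=> x xnz xS; apply: a0_class.
have sum := a0_sum.
rewrite (bigID (mem S)) /= in sum.
rewrite (eq_bigr (fun _ => al)) in sum; last by move=> x /andP [_ /hS].
rewrite [X in (_ + X)%N](eq_bigr (fun _ => be)) in sum; last by move=> x /andP [xnz xS]; apply: hN.
rewrite !sum_nat_cond_const card_N in sum.
have cS : #|[set x : F | (x != 0) && (x \in S)]| = h.
  by rewrite -card_S; apply: eq_card => x; rewrite !inE andbA andbb.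
rewrite cS in sum.
have e : (h * (al + be) = h * (2 * K))%N.
  by rewrite mulnDr mulnA (mulnC h 2) h2.
move/eqP: e; rewrite eqn_pmul2l ?h_gt0 // => /eqP sum2.
have sp := congr1 (muln p) sum2; rewrite mulnDr mulnCA pK in sp.
have k1 := key_even em (oner_neq0 F); have kg := key_even em gnz.
rewrite -/al in k1; rewrite -/be in kg.
have Ypos : (0 < (p - 1) * s)%N.
  by rewrite muln_gt0 subn_gt0 p_gt1 expn_gt0 prime_gt0.
have hw1 := @wt_w1; have hw2 := @wt_w2.
case: k1 => E1; case: kg => E2; try (exfalso; lia).
- exists S; split => //; first by apply/negP => /S_nz; rewrite eqxx.
  + exact: card_S.
  + exact: card_N.
  move=> x xnz; case: (boolP (x \in S)) => xS.
    by apply: wt_w1; rewrite (hS _ xS).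
  by apply: wt_w2; rewrite (hN _ xnz xS).
- exists [set x : F | (x != 0) && (x \notin S)]; split.
  + by rewrite inE eqxx.
  + exact: card_N.
  + rewrite -card_S; apply: eq_card => x; rewrite !inE.
    by case: (x == 0); case: [exists y : F, y ^+ 2 == x].
  move=> x xnz; rewrite inE xnz /=; case: (boolP (x \in S)) => xS /=.
    by apply: wt_w2; rewrite (hS _ xS).
  by apply: wt_w1; rewrite (hN _ xnz xS).
Qed.

Lemma s_pos : (0 < s)%N. Proof. by rewrite expn_gt0 prime_gt0. Qed.

Lemma dvd_w : ~~ odd m ->
  (2 * p * w1 = (p - 1) * (q - s))%N /\ (2 * p * w2 = (p - 1) * (q + s))%N.
Proof.
move=> em; have d2 : (2 %| p - 1)%N by rewrite dvdn2 oddB ?odd_p // prime_gt0.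
have m2 : (0 < m %/ 2)%N.
  rewrite divn_gt0 //; case: m m_gt0 em => [|[|n]] //.
have dq : (p %| q)%N by rewrite dvdn_exp.
have ds : (p %| s)%N by rewrite dvdn_exp.
split; rewrite mulnC divnK //; apply: dvdn_mul => //.
  exact: dvdn_sub.
exact: dvdn_add.
Qed.

Lemma w_props : ~~ odd m -> (0 < w1)%N /\ (w1 < w2)%N.
Proof.
move=> em; have [e1 e2] := dvd_w em.
have hs := s_lt_q; have sp := s_pos; have p1 := p_gt1.
have pp : (0 < 2 * p)%N by rewrite muln_gt0 (prime_gt0 pr_p).
split.
  rewrite -(ltn_pmul2l pp) muln0 e1 muln_gt0 subn_gt0 p1 /=; lia.
rewrite -(ltn_pmul2l pp) e1 e2 ltn_pmul2l ?subn_gt0 //; lia.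
Qed.

Local Close Scope ring_scope.
Lemma main_sec :
  #|nzsquares F| = (p ^ m - 1) %/ 2 /\
  #|code_D p m (nzsquares F)| = p ^ m /\
  (odd m ->
     nz_weights (nzsquares F) (code_D p m (nzsquares F))
       =i [:: (p - 1) * p ^ m %/ (2 * p)]) /\
  (~~ odd m ->
     let s := p ^ (m %/ 2) in
     let w1 := (p - 1) * (p ^ m - s) %/ (2 * p) in
     let w2 := (p - 1) * (p ^ m + s) %/ (2 * p) in
     nz_weights (nzsquares F) (code_D p m (nzsquares F)) =i [:: w1; w2] /\
     w1 < w2 /\
     (forall i : nat,
        wcount (nzsquares F) (code_D p m (nzsquares F)) i =
          if i == 0 then 1
          else if i == w1 then (p ^ m - 1) %/ 2
          else if i == w2 then (p ^ m - 1) %/ 2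
          else 0)).
Proof.
Local Open Scope ring_scope.
split; first exact: card_S.
split; first exact: card_code.
split.
  move=> om w; rewrite nzw_eq inE; apply/existsP/eqP => [[x /andP [nz /eqP <-]]|->].
    exact: wt_odd.
  by exists 1; rewrite oner_neq0 /= wt_odd ?oner_neq0.
move=> em /=.
have [A1 [A10 cA1 cA2 hw]] := even_dist em.
have [w1p w12] := w_props em.
have wtf : forall x, wt x = if x == 0 then 0%N else if x \in A1 then w1 else w2.
  by move=> x; case: (eqVneq x 0) => [->|nz]; [exact: wt0 | exact: hw].
have [x1 hx1] : exists x1, x1 \in A1.
  by apply/set0Pn; rewrite -card_gt0 cA1 h_gt0.
have [x2 hx2] : exists x2, x2 \in [set x : F | (x != 0) && (x \notin A1)].
  by apply/set0Pn; rewrite -card_gt0 cA2 h_gt0.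
have x1nz : x1 != 0 by apply: contraNneq A10 => <-.
move: hx2; rewrite inE => /andP [x2nz x2A].
split.
  move=> w; rewrite nzw_eq !inE; apply/existsP/idP => [[x /andP [nz /eqP <-]]|].
    by rewrite wtf (negbTE nz); case: (x \in A1); rewrite eqxx ?orbT.
  case/orP => /eqP ->.
    by exists x1; rewrite x1nz wtf (negbTE x1nz) hx1 eqxx.
  by exists x2; rewrite x2nz wtf (negbTE x2nz) (negbTE x2A) eqxx.
split; first exact: w12.
move=> i; rewrite wcount_eq.
have w1n0 : w1 != 0%N by rewrite -lt0n.
have w2n0 : w2 != 0%N by rewrite -lt0n (ltn_trans w1p w12).
have w12n : w1 != w2 by rewrite ltn_eqF.
case: (eqVneq i 0) => [->|i0].
  rewrite (_ : [set x : F | wt x == 0%N] = [set 0]) ?cards1 //.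
  apply/setP => x; rewrite !inE wtf; case: (eqVneq x 0) => //= _.
  by case: (x \in A1); rewrite ?(negbTE w1n0) ?(negbTE w2n0).
case: (eqVneq i w1) => [->|iw1].
  rewrite -cA1; apply: eq_card => x; rewrite !inE wtf.
  case: (eqVneq x 0) => [->|_]; first by rewrite (negbTE A10) eq_sym (negbTE w1n0).
  by case: (x \in A1); rewrite ?eqxx // eq_sym (negbTE w12n).
case: (eqVneq i w2) => [->|iw2].
  rewrite -cA2; apply: eq_card => x; rewrite !inE wtf.
  case: (eqVneq x 0) => [->|_] /=; first by rewrite eq_sym (negbTE w2n0).
  by case: (x \in A1); rewrite ?eqxx // (negbTE w12n).
apply/eqP; rewrite cards_eq0; apply/eqP/setP => x; rewrite !inE wtf.
case: (x == 0); first by rewrite eq_sym (negbTE i0).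
by case: (x \in A1); rewrite eq_sym ?(negbTE iw1) ?(negbTE iw2).
Qed.
End Main.

Local Close Scope ring_scope.
Theorem mainTheorem3 (F : finFieldType) (p m : nat) :
  prime p -> odd p -> p \in [pchar F]%R -> 0 < m -> #|F| = p ^ m ->
  (* length n = (q-1)/2 *)
  #|nzsquares F| = (p ^ m - 1) %/ 2 /\
  (* dimension m over GF(p): the code has p^m codewords *)
  #|code_D p m (nzsquares F)| = p ^ m /\
  (odd m ->
     nz_weights (nzsquares F) (code_D p m (nzsquares F))
       =i [:: (p - 1) * p ^ m %/ (2 * p)]) /\
  (~~ odd m ->
     let s := p ^ (m %/ 2) in
     let w1 := (p - 1) * (p ^ m - s) %/ (2 * p) in
     let w2 := (p - 1) * (p ^ m + s) %/ (2 * p) in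
     nz_weights (nzsquares F) (code_D p m (nzsquares F)) =i [:: w1; w2] /\
     w1 < w2 /\
     (forall i : nat,
        wcount (nzsquares F) (code_D p m (nzsquares F)) i =
          if i == 0 then 1
          else if i == w1 then (p ^ m - 1) %/ 2
          else if i == w2 then (p ^ m - 1) %/ 2
          else 0)).
Proof.
move=> pr op pF m0 cF; exact: (main_sec pr op pF m0 cF).
Qed.
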